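(* Let $\tilde{\mathfrak g}$ be a real Lie algebra with a metric $\langle,\rangle$ and a pseudo-Iwasawa decomposition $\tilde{\mathfrak g}=\mathfrak g\oplus^\perp\mathfrak a$. Let $H\in\tilde{\mathfrak g}$ be defined by $\langle H,v\rangle=\operatorname{Tr}(\operatorname{ad}v)$ for all $v\in\tilde{\mathfrak g}$, let $\widetilde{\operatorname{ric}}$ be the Ricci tensor of $\tilde{\mathfrak g}$ and $\operatorname{ric}$ that of $\mathfrak g$ with the restricted metric. Then $\widetilde{\operatorname{ric}}(v,w)=\operatorname{ric}(v,w)-\langle[H,v],w\rangle$ for $v,w\in\mathfrak g$; $\widetilde{\operatorname{ric}}(v,X)=0$ for $v\in\mathfrak g$, $X\in\mathfrak a$; $\widetilde{\operatorname{ric}}(X,Y)=-\operatorname{Tr}(\operatorname{ad}X\circ\operatorname{ad}Y)$ for $X,Y\in\mathfrak a$.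
   Context: A metric on a Lie algebra is a nondegenerate symmetric bilinear form, possibly indefinite; the Ricci tensor is that of the corresponding left-invariant pseudo-Riemannian metric on the simply connected Lie group. A pseudo-Iwasawa decomposition of a metric Lie algebra $\tilde{\mathfrak g}$ is an orthogonal direct sum of vector spaces $\tilde{\mathfrak g}=\mathfrak g\oplus^\perp\mathfrak a$ with $\mathfrak g$ a nilpotent ideal, $\mathfrak a$ an abelian subalgebra, and $\operatorname{ad}X$ self-adjoint for every $X\in\mathfrak a$. *)

(* Defs.v *)
From HB Require Import structures.
From mathcomp Require Import all_boot all_order all_algebra.
From mathcomp Require Import reals.
Set Implicit Arguments. Unset Strict Implicit. Unset Printing Implicit Defensive.
Import Order.TTheory GRing.Theory Num.Theory.
Local Open Scope ring_scope.

Section MetricLie.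
Variables (R : fieldType) (V : vectType R).

(* trace of an (assumed linear) endomorphism, computed in the basis vbasis fullv *)
Definition vtrace (f : V -> V) : R :=
  \sum_(i < \dim {:V}) coord (vbasis fullv) i (f (tnth (vbasis fullv) i)).

Definition is_lie_bracket (br : V -> V -> V) : Prop :=
  [/\ (forall (a : R) x y z, br (a *: x + y) z = a *: br x z + br y z),
      (forall (a : R) x y z, br x (a *: y + z) = a *: br x y + br x z),
      (forall x, br x x = 0) &
      (forall x y z, br x (br y z) + br y (br z x) + br z (br x y) = 0)].

Definition is_metric (met : V -> V -> R) : Prop :=
  [/\ (forall (a : R) x y z, met (a *: x + y) z = a * met x z + met y z),
      (forall x y, met x y = met y x) &
      (forall x, (forall y, met x y = 0) -> x = 0)].

Variables (br : V -> V -> V) (met : V -> V -> R).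

(* right-hand side of the Koszul formula: <nabla_x y, z> = koszul x y z *)
Definition koszul (x y z : V) : R :=
  (met (br x y) z - met (br y z) x + met (br z x) y) / 2%:R.

Definition gram : 'M[R]_(\dim {:V}) :=
  \matrix_(i, j) met (tnth (vbasis fullv) i) (tnth (vbasis fullv) j).

(* Levi-Civita connection: nabla x y is the unique vector w with
   met w z = koszul x y z for all z (solved through the Gram matrix). *)
Definition nabla (x y : V) : V :=
  let c := (\row_j koszul x y (tnth (vbasis fullv) j)) *m invmx gram in
  \sum_(i < \dim {:V}) c 0 i *: tnth (vbasis fullv) i.

Definition curv (x y z : V) : V :=
  nabla x (nabla y z) - nabla y (nabla x z) - nabla (br x y) z.

Definition ricci (x y : V) : R := vtrace (fun z => curv z x y).

(* restriction of bracket and metric to a subspace U (the bracket is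
   projected back into U; for a subalgebra this is the restricted bracket) *)
Definition br_sub (U : {vspace V}) (u v : subvs_of U) : subvs_of U :=
  vsproj U (br (vsval u) (vsval v)).
Definition met_sub (U : {vspace V}) (u v : subvs_of U) : R :=
  met (vsval u) (vsval v).

(* U is nilpotent: all right-normed brackets [x1,[x2,...,[xk,y]]] with
   k entries from U (and y in U) vanish, i.e. the lower central series ends *)
Definition nilpotent_sub (U : {vspace V}) : Prop :=
  exists k : nat, forall (xs : seq V) (y : V), size xs = k ->
    all (fun x => x \in U) xs -> y \in U -> foldr br y xs = 0.

Definition ideal_sub (U : {vspace V}) : Prop :=
  forall x y, x \in U -> br y x \in U.

Definition pseudo_iwasawa (g a : {vspace V}) : Prop :=
  [/\ (g + a)%VS = fullv /\ (g :&: a)%VS = 0%VS,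
      (forall x y, x \in g -> y \in a -> met x y = 0),
      ideal_sub g /\ nilpotent_sub g,
      (forall X Y, X \in a -> Y \in a -> br X Y = 0) &
      (forall X u v, X \in a -> met (br X u) v = met u (br X v))].

End MetricLie.

Arguments br_sub {R V} br U u v.
Arguments met_sub {R V} met U u v.

(* Main.v *)
Require Import Defs.
From HB Require Import structures.
From mathcomp Require Import all_boot all_order all_algebra.
From mathcomp Require Import reals ring lra.
Set Implicit Arguments. Unset Strict Implicit. Unset Printing Implicit Defensive.
Import GRing.Theory Num.Theory.
Local Open Scope ring_scope.


Section Lin.
Variables (K : fieldType) (W : vectType K).

Definition lin (f : W -> W) := forall (k : K) x y, f (k *: x + y) = k *: f x + f y.
Definition slin (f : W -> K) := forall (k : K) x y, f (k *: x + y) = k * f x + f y.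

Variable f : W -> W.
Hypothesis Hf : lin f.
Lemma lin0 : f 0 = 0.
Proof. by have := Hf 1 0 0; rewrite scaler0 addr0 scale1r => /eqP; rewrite -subr_eq0 opprD addrA subrr add0r oppr_eq0 => /eqP. Qed.
Lemma linD x y : f (x + y) = f x + f y.
Proof. by have := Hf 1 x y; rewrite !scale1r. Qed.
Lemma linZ k x : f (k *: x) = k *: f x.
Proof. by have := Hf k x 0; rewrite !addr0 lin0 addr0. Qed.
Lemma linN x : f (- x) = - f x.
Proof. by rewrite -scaleN1r linZ scaleN1r. Qed.
Lemma linB x y : f (x - y) = f x - f y.
Proof. by rewrite linD linN. Qed.
Lemma lin_sum (I : Type) (r : seq I) (P : pred I) (F : I -> W) :
  f (\sum_(i <- r | P i) F i) = \sum_(i <- r | P i) f (F i).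
Proof. exact: (big_morph f linD lin0). Qed.

Variable h : W -> K.
Hypothesis Hh : slin h.
Lemma slin0 : h 0 = 0.
Proof. by have := Hh 1 0 0; rewrite scaler0 addr0 mul1r => /eqP; rewrite -subr_eq0 opprD addrA subrr add0r oppr_eq0 => /eqP. Qed.
Lemma slinD x y : h (x + y) = h x + h y.
Proof. by have := Hh 1 x y; rewrite !scale1r mul1r. Qed.
Lemma slinZ k x : h (k *: x) = k * h x.
Proof. by have := Hh k x 0; rewrite !addr0 slin0 addr0. Qed.
Lemma slinN x : h (- x) = - h x.
Proof. by rewrite -scaleN1r slinZ mulN1r. Qed.
Lemma slinB x y : h (x - y) = h x - h y.
Proof. by rewrite slinD slinN. Qed.
Lemma slin_sum (I : Type) (r : seq I) (P : pred I) (F : I -> W) :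
  h (\sum_(i <- r | P i) F i) = \sum_(i <- r | P i) h (F i).
Proof. exact: (big_morph h slinD slin0). Qed.
End Lin.

Section Trace.
Variables (K : fieldType) (W : vectType K).
Implicit Types (U : {vspace W}) (f : W -> W).

Definition trU U f := \sum_(i < \dim U) coord (vbasis U) i (f (vbasis U)`_i).

Lemma vtrace_trU f : vtrace f = trU fullv f.
Proof. by apply: eq_bigr => i _; rewrite (tnth_nth 0). Qed.

Lemma vb_mem U (i : 'I_(\dim U)) : (vbasis U)`_i \in U.
Proof. by apply: vbasis_mem; apply: mem_nth; rewrite size_tuple. Qed.

Lemma trU_rank1 U f n (phi : 'I_n -> W -> K) (u : 'I_n -> W) :
  (forall k, slin (phi k)) -> (forall k, u k \in U) ->
  (forall x, x \in U -> f x = \sum_k phi k x *: u k) ->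
  trU U f = \sum_k phi k (u k).
Proof.
move=> Hphi Hu Hf; rewrite /trU.
under eq_bigr => i _ do rewrite (Hf _ (vb_mem i)) linear_sum.
rewrite exchange_big; apply: eq_bigr => k _ /=.
rewrite {2}(coord_vbasis (Hu k)) slin_sum //.
by apply: eq_bigr => i _; rewrite linearZ slinZ // mulrC.
Qed.

Lemma trU_ext U f h : (forall x, x \in U -> f x = h x) -> trU U f = trU U h.
Proof. by move=> E; apply: eq_bigr => i _; rewrite E // vb_mem. Qed.

Lemma trU_add U f h : trU U (fun x => f x + h x) = trU U f + trU U h.
Proof. by rewrite /trU -big_split; apply: eq_bigr => i _; rewrite linearD. Qed.

Lemma trU_opp U f : trU U (fun x => - f x) = - trU U f.
Proof. by rewrite /trU -sumrN; apply: eq_bigr => i _; rewrite linearN. Qed.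

Lemma trU_scale U f k : trU U (fun x => k *: f x) = k * trU U f.
Proof. by rewrite /trU mulr_sumr; apply: eq_bigr => i _; rewrite linearZ. Qed.

Lemma trU_nil N : forall U f, lin f -> (forall x, x \in U -> f x \in U) ->
  (forall x, x \in U -> iter N f x = 0) -> trU U f = 0.
Proof.
elim: N => [|N IH] U f Hf fU Hn.
  by rewrite /trU big1 // => i _; have /= -> := Hn _ (vb_mem i); rewrite lin0 // linear0.
pose X := map_tuple f (vbasis U).
pose U' := span X.
have fU' x : x \in U -> f x \in U'.
  move=> xU; rewrite (coord_vbasis xU) lin_sum //; apply: memv_suml => i _.
  rewrite linZ //; apply: memvZ; rewrite /U' memv_span //.
  by apply/mapP; exists (vbasis U)`_i => //; apply: mem_nth; rewrite size_tuple.
have U'f x : x \in U' -> exists2 y, y \in U & x = f y.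
  move=> /coord_span ->; exists (\sum_i coord X i x *: (vbasis U)`_i).
    by apply: memv_suml => i _; apply: memvZ; apply: vb_mem.
  rewrite lin_sum //; apply: eq_bigr => i _; rewrite linZ //.
  by rewrite /X /= (nth_map 0) // size_tuple.
have -> : trU U f = trU U' f.
  apply: (@trU_rank1 U f _ (fun k x => coord (vbasis U') k (f x))
     (fun k => (vbasis U')`_k)).
  - by move=> k c x y; rewrite Hf linearP.
  - move=> k; have := vb_mem k; apply/subvP; apply/span_subvP => _ /mapP [z zb ->].
    by apply: fU; apply: vbasis_mem.
  - by move=> x xU; apply: coord_vbasis; apply: fU'.
apply: IH => //.
  by move=> x /U'f [y yU ->]; apply: fU'; apply: fU.
by move=> x /U'f [y yU ->]; rewrite -iterSr Hn.
Qed.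

Lemma vtrace_nil N f : lin f -> (forall x, iter N f x = 0) -> vtrace f = 0.
Proof. by move=> Hf Hn; rewrite vtrace_trU (@trU_nil N _ _ Hf) // => x _; apply: memvf. Qed.

Lemma vexpU (U : {vspace W}) (x : W) : x \in U -> x = \sum_i coord (vbasis U) i x *: tnth (vbasis U) i.
Proof.
by move=> xU; rewrite {1}(coord_vbasis xU); apply: eq_bigr => i _; rewrite (tnth_nth 0).
Qed.

Lemma vtrace_ext f h : (forall x, f x = h x) -> vtrace f = vtrace h.
Proof. by move=> E; apply: eq_bigr => i _; rewrite E. Qed.
Lemma vtrace_add f h : vtrace (fun x => f x + h x) = vtrace f + vtrace h.
Proof. by rewrite !vtrace_trU trU_add. Qed.
Lemma vtrace_opp f : vtrace (fun x => - f x) = - vtrace f.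
Proof. by rewrite !vtrace_trU trU_opp. Qed.
Lemma vtrace_sub f h : vtrace (fun x => f x - h x) = vtrace f - vtrace h.
Proof. by rewrite vtrace_add vtrace_opp. Qed.
Lemma vtrace_scale f k : vtrace (fun x => k *: f x) = k * vtrace f.
Proof. by rewrite !vtrace_trU trU_scale. Qed.

Lemma vtrace_rank1 f n (phi : 'I_n -> W -> K) (u : 'I_n -> W) :
  (forall k, slin (phi k)) -> (forall x, f x = \sum_k phi k x *: u k) ->
  vtrace f = \sum_k phi k (u k).
Proof.
move=> Hphi Hf; rewrite vtrace_trU; apply: trU_rank1 => // k; exact: memvf.
Qed.

Lemma vtrace_comm f h : lin f -> lin h -> vtrace (fun x => f (h x)) = vtrace (fun x => h (f x)).
Proof.
move=> Hf Hh.
rewrite (@vtrace_rank1 _ _ (fun i x => coord (vbasis fullv) i (h x))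
   (fun i => f (tnth (vbasis fullv) i))).
- by apply: eq_bigr => i _.
- by move=> i k x y; rewrite Hh linearP.
- move=> x; rewrite {1}(vexpU (memvf (h x))) lin_sum //.
  by apply: eq_bigr => i _; rewrite linZ.
Qed.

End Trace.


Section Metric.
Variables (K : fieldType) (W : vectType K) (met : W -> W -> K).
Hypothesis Hm : is_metric met.

Let e := vbasis (fullv : {vspace W}).

Lemma met_sym x y : met x y = met y x.
Proof. by case: Hm. Qed.
Lemma metl z : slin (fun x => met x z).
Proof. by case: Hm => H _ _ k x y; apply: H. Qed.
Lemma metr z : slin (met z).
Proof. by move=> k x y; rewrite !(met_sym z); apply: metl. Qed.
Lemma met_nondeg x y : (forall z, met x z = met y z) -> x = y.
Proof.
case: Hm => _ _ H E; apply/eqP; rewrite -subr_eq0; apply/eqP/H => z.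
by rewrite (slinB (metl z)) E subrr.
Qed.

Lemma vexp (x : W) : x = \sum_i coord e i x *: tnth e i.
Proof.
by rewrite {1}(coord_vbasis (memvf x)); apply: eq_bigr => i _; rewrite (tnth_nth 0).
Qed.

Lemma met_exp x z : met x z = \sum_j coord e j z * met x (tnth e j).
Proof. by rewrite {1}(vexp z) (slin_sum (metr x)); apply: eq_bigr => j _; rewrite (slinZ (metr x)). Qed.

Lemma gram_unit : gram met \in unitmx.
Proof.
have Hv (v : 'rV_(\dim {:W})) : v *m gram met = 0 -> v = 0.
  move=> Hv0; pose x := \sum_i v 0 i *: tnth e i.
  have xe j : met x (tnth e j) = 0.
    have := congr1 (fun M : 'M_(1, \dim {:W}) => M 0 j) Hv0; rewrite !mxE => <-.
    rewrite /x (slin_sum (metl _)); apply: eq_bigr => i _.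
    by rewrite (slinZ (metl _)) mxE.
  have x0 : x = 0.
    apply: met_nondeg => z; rewrite met_exp big1 ?(slin0 (metl z)) // => j _.
    by rewrite xe mulr0.
  apply/rowP => i; rewrite mxE.
  have := congr1 (coord e i) x0; rewrite linear0 /x.
  under eq_bigr => k _ do rewrite (tnth_nth 0).
  by rewrite coord_sum_free // (basis_free (vbasisP _)).
rewrite -row_free_unit -kermx_eq0; apply/eqP/row_matrixP => i.
by rewrite row0; apply: Hv; rewrite -row_mul mulmx_ker row0.
Qed.

Definition riesz (phi : W -> K) : W :=
  let c := (\row_j phi (tnth e j)) *m invmx (gram met) in
  \sum_(i < \dim {:W}) c 0 i *: tnth e i.

Lemma rieszP phi : slin phi -> forall z, met (riesz phi) z = phi z.
Proof.
move=> Hphi z; rewrite met_exp {2}(vexp z) (slin_sum Hphi); apply: eq_bigr => j _.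
rewrite (slinZ Hphi); congr (_ * _).
pose c := (\row_j phi (tnth e j)) *m invmx (gram met).
have : (c *m gram met) 0 j = phi (tnth e j).
  by rewrite /c mulmxKV ?gram_unit // mxE.
rewrite mxE => <-; rewrite /riesz -/c (slin_sum (metl _)); apply: eq_bigr => i _.
by rewrite (slinZ (metl _)) /gram !mxE.
Qed.

Definition ed i := riesz (coord e i).
Lemma coord_slin i : slin (coord e i).
Proof. by move=> k x y; rewrite linearP. Qed.
Lemma edP i x : met (ed i) x = coord e i x.
Proof. by rewrite rieszP //; apply: coord_slin. Qed.

Lemma vexp2 x : x = \sum_i met (tnth e i) x *: ed i.
Proof.
apply: met_nondeg => z; rewrite (slin_sum (metl z)) met_sym {1}(vexp z).
rewrite (slin_sum (metl x)); apply: eq_bigr => i _.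
by rewrite !(slinZ (metl _)) edP mulrC.
Qed.

Lemma vtrace_met f : vtrace f = \sum_i met (ed i) (f (tnth e i)).
Proof. by apply: eq_bigr => i _; rewrite edP. Qed.

Lemma vtrace_met2 f : lin f -> vtrace f = \sum_i met (tnth e i) (f (ed i)).
Proof.
move=> Hf; apply: (vtrace_rank1 (phi := fun i x => met (tnth e i) x)).
  by move=> i; apply: metr.
by move=> x; rewrite {1}(vexp2 x) lin_sum //; apply: eq_bigr => i _; rewrite linZ.
Qed.

Variable br : W -> W -> W.
Hypothesis brl : forall z, lin (fun x => br x z).
Hypothesis brr : forall z, lin (br z).

Lemma slin_add (f h : W -> K) : slin f -> slin h -> slin (fun z => f z + h z).
Proof. by move=> Hf Hh k x y; rewrite Hf Hh; ring. Qed.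
Lemma slin_sub (f h : W -> K) : slin f -> slin h -> slin (fun z => f z - h z).
Proof. by move=> Hf Hh k x y; rewrite Hf Hh; ring. Qed.
Lemma slin_mulr (f : W -> K) c : slin f -> slin (fun z => f z * c).
Proof. by move=> Hf k x y; rewrite Hf; ring. Qed.
Lemma slin_comp (f : W -> W) (h : W -> K) : lin f -> slin h -> slin (fun z => h (f z)).
Proof. by move=> Hf Hh k x y; rewrite Hf Hh. Qed.

Lemma koszul_slin x y : slin (koszul br met x y).
Proof.
apply: slin_mulr; apply: slin_add; first apply: slin_sub.
- exact: metr.
- exact: (slin_comp (brr y) (metl x)).
- exact: (slin_comp (brl x) (metl y)).
Qed.

Definition nablaE x y : nabla br met x y = riesz (koszul br met x y) := erefl.

Lemma nabla_spec x y z : met (nabla br met x y) z = koszul br met x y z.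
Proof. by rewrite nablaE rieszP //; apply: koszul_slin. Qed.

Lemma koszul_liny x z k u v :
  koszul br met x (k *: u + v) z = k * koszul br met x u z + koszul br met x v z.
Proof.
rewrite /koszul (linD (brr x)) (linZ (brr x)) (linD (brl z)) (linZ (brl z)).
rewrite !(slinD (metl _)) !(slinZ (metl _)) !(slinD (metr _)) !(slinZ (metr _)).
ring.
Qed.

Lemma koszul_linx y z k u v :
  koszul br met (k *: u + v) y z = k * koszul br met u y z + koszul br met v y z.
Proof.
rewrite /koszul (linD (brl y)) (linZ (brl y)) (linD (brr z)) (linZ (brr z)).
rewrite !(slinD (metl _)) !(slinZ (metl _)) !(slinD (metr _)) !(slinZ (metr _)).
ring.
Qed.

Lemma nabla_linr x : lin (nabla br met x).
Proof.
move=> k u v; apply: met_nondeg => z.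
by rewrite (slinD (metl _)) (slinZ (metl _)) !nabla_spec koszul_liny.
Qed.

Lemma nabla_linl y : lin (fun x => nabla br met x y).
Proof.
move=> k u v; apply: met_nondeg => z.
by rewrite (slinD (metl _)) (slinZ (metl _)) !nabla_spec koszul_linx.
Qed.

Hypothesis br_anti : forall x y, br x y = - br y x.
Hypothesis two_nz : (2%:R : K) != 0.

Lemma ed_br_sum : \sum_i br (ed i) (tnth e i) = 0.
Proof.
pose S := \sum_i \sum_j met (ed j) (ed i) *: br (tnth e j) (tnth e i).
have ES : \sum_i br (ed i) (tnth e i) = S.
  apply: eq_bigr => i _; rewrite {1}(vexp (ed i)) (lin_sum (brl _)).
  by apply: eq_bigr => j _; rewrite (linZ (brl _)) edP.
have SS : S = - S.
  rewrite {1}/S exchange_big /S -sumrN; apply: eq_bigr => i _.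
  rewrite -sumrN; apply: eq_bigr => j _.
  by rewrite met_sym br_anti scalerN.
rewrite ES; apply/eqP; move: SS => /eqP; rewrite -subr_eq0 opprK -mulr2n.
by rewrite -scaler_nat scaler_eq0 (negPf two_nz).
Qed.

End Metric.


Lemma rearr3 (M : zmodType) (a1 a2 b1 b2 c1 c2 : M) :
  (a1 + a2) - (b1 + b2) - (c1 + c2) = (a1 - b1 - c1) + (a2 - b2 - c2).
Proof. by rewrite !opprD !addrA (addrAC a1 a2) (addrAC _ (- b2) (- c1)) (addrAC _ a2 (- c1)). Qed.

Lemma jac_rearr (M : zmodType) (A B C : M) : A - B + C = 0 -> A = B - C.
Proof. by move=> E; rewrite -[LHS]subr0 -E opprD addrA opprB addrA (addrAC A B) subrr add0r. Qed.

Lemma rearr2 (M : zmodType) (a1 a2 b1 b2 c1 : M) :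
  (a1 + a2) - (b1 + b2) - c1 = (a1 - b1 - c1) + a2 - b2.
Proof. by have := rearr3 a1 a2 b1 b2 c1 0; rewrite !addr0 oppr0 addr0 addrA. Qed.

Section Main.
Variables (R : realType) (V : vectType R) (br : V -> V -> V) (met : V -> V -> R)
  (g a : {vspace V}) (H : V).
Hypothesis Hbr : is_lie_bracket br.
Hypothesis Hm : is_metric met.
Hypothesis Hiw : pseudo_iwasawa br met g a.
Hypothesis HH : forall v, met H v = vtrace (br v).

Lemma brl z : lin (fun x => br x z). Proof. by case: Hbr => H1 _ _ _ k x y; apply: H1. Qed.
Lemma brr z : lin (br z). Proof. by case: Hbr => _ H2 _ _ k x y; apply: H2. Qed.
Lemma br_anti x y : br x y = - br y x.
Proof.
case: Hbr => _ _ H3 _; have := H3 (x + y).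
rewrite (linD (brl _)) !(linD (brr _)) !H3 add0r addr0 => /eqP; rewrite addr_eq0 => /eqP.
done.
Qed.
Lemma jac x y z : br x (br y z) + br y (br z x) + br z (br x y) = 0.
Proof. by case: Hbr. Qed.

Lemma gcap : (g :&: a = 0)%VS. Proof. by case: Hiw => [[_ ->]]. Qed.
Lemma acap : (a :&: g = 0)%VS. Proof. by rewrite capvC gcap. Qed.
Lemma gsum : (g + a = fullv)%VS. Proof. by case: Hiw => [[-> _]]. Qed.
Lemma orth x y : x \in g -> y \in a -> met x y = 0. Proof. by case: Hiw => _ H2 _ _ _; apply: H2. Qed.
Lemma ideal x y : x \in g -> br y x \in g. Proof. by case: Hiw => _ _ [H3 _] _ _; apply: H3. Qed.
Lemma abel X Y : X \in a -> Y \in a -> br X Y = 0. Proof. by case: Hiw => _ _ _ H4 _; apply: H4. Qed.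
Lemma sadj X u v : X \in a -> met (br X u) v = met u (br X v). Proof. by case: Hiw => _ _ _ _ H5; apply: H5. Qed.

Let pg := daddv_pi g a.
Let pa := daddv_pi a g.
Lemma pgpa x : pg x + pa x = x.
Proof. by rewrite daddv_pi_add ?gcap // gsum memvf. Qed.
Lemma pg_mem x : pg x \in g. Proof. exact: memv_pi. Qed.
Lemma pa_mem x : pa x \in a. Proof. exact: memv_pi. Qed.
Lemma pg_id x : x \in g -> pg x = x. Proof. exact: daddv_pi_id gcap. Qed.
Lemma pa_id x : x \in a -> pa x = x. Proof. exact: daddv_pi_id acap. Qed.
Lemma pa_g x : x \in g -> pa x = 0.
Proof. by move=> xg; have E := pgpa x; rewrite pg_id // in E; rewrite -(addKr x (pa x)) E addNr. Qed.
Lemma pg_a x : x \in a -> pg x = 0.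
Proof. by move=> xa; have E := pgpa x; rewrite pa_id // in E; rewrite -(addrK x (pg x)) E subrr. Qed.

Lemma br_in_g y z : br y z \in g.
Proof.
rewrite -(pgpa y) -(pgpa z) (linD (brl _)) !(linD (brr _)) (abel (pa_mem _) (pa_mem _)) addr0.
apply: memvD; first apply: memvD.
- exact: ideal (pg_mem _).
- by rewrite br_anti memvN ideal // pg_mem.
- exact: ideal (pg_mem _).
Qed.

Lemma met_pg x z : z \in g -> met x z = met (pg x) z.
Proof.
move=> zg; rewrite -{1}(pgpa x) (slinD (metl Hm _)) [met (pa x) z](met_sym Hm).
by rewrite (orth zg (pa_mem x)) addr0.
Qed.

Lemma met_pa x Y : Y \in a -> met x Y = met (pa x) Y.
Proof.
by move=> Ya; rewrite -{1}(pgpa x) (slinD (metl Hm _)) (orth (pg_mem x) Ya) add0r.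
Qed.

Notation N := (nabla br met).
Lemma N_spec x y z : met (N x y) z = koszul br met x y z.
Proof. exact: (nabla_spec Hm brl brr). Qed.
Lemma NlinL y : lin (fun x => N x y). Proof. exact: (nabla_linl Hm brl brr). Qed.
Lemma NlinR x : lin (N x). Proof. exact: (nabla_linr Hm brl brr). Qed.

Lemma two_nz : (2%:R : R) != 0. Proof. by rewrite pnatr_eq0. Qed.
Lemma half2 (m : R) : (m + m) / 2%:R = m.
Proof. by rewrite -mulr2n -[m *+ 2]mulr_natr mulfK // two_nz. Qed.

Lemma Na X y : X \in a -> N X y = 0.
Proof.
move=> Xa; apply: (met_nondeg Hm) => z; rewrite N_spec (slin0 (metl Hm z)) /koszul.
rewrite [met (br y z) X]orth ?br_in_g //.
rewrite (br_anti z X) (slinN (metl Hm _)) sadj // (met_sym Hm y).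
by rewrite subr0 subrr mul0r.
Qed.

Lemma N_a u X : X \in a -> N u X = br u X.
Proof.
move=> Xa; apply: (met_nondeg Hm) => z; rewrite N_spec /koszul.
rewrite [met (br z u) X]orth ?br_in_g // addr0 (sadj z u Xa) (met_sym Hm z) (br_anti X u) (slinN (metl Hm _)) opprK.
exact: half2.
Qed.

Lemma kosz_a v w X : X \in a -> koszul br met v w X = met (br X v) w.
Proof.
move=> Xa; rewrite /koszul [met (br v w) X]orth ?br_in_g // sub0r.
rewrite (br_anti w X) (slinN (metl Hm _)) opprK (sadj w v Xa) (met_sym Hm w).
exact: half2.
Qed.

Lemma lin_comp (f h : V -> V) : lin f -> lin h -> lin (fun x => f (h x)).
Proof. by move=> Hf Hh k x y; rewrite Hh Hf. Qed.

Lemma iter_br n y x : iter n (br y) x = foldr br x (nseq n y).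
Proof. by elim: n => //= n ->. Qed.

Lemma nilk : exists k : nat, forall (xs : seq V) (y : V), size xs = k ->
    all (fun x => x \in g) xs -> y \in g -> foldr br y xs = 0.
Proof. by case: Hiw => _ _ [_ Hn] _ _. Qed.

Lemma tr_ad_g y : y \in g -> vtrace (br y) = 0.
Proof.
move=> yg; have [k Hk] := nilk.
apply: (@vtrace_nil _ _ k.+1 _ (brr y)) => x.
rewrite iterSr iter_br Hk ?size_nseq ?br_in_g //.
by apply/allP => t /nseqP [-> _].
Qed.

Definition Zj j x := forall xs, size xs = j -> all (fun t => t \in g) xs -> foldr br x xs = 0.

Lemma foldr_lin xs : lin (fun x => foldr br x xs).
Proof. by elim: xs => [|y xs IH] k u v //=; rewrite IH (brr y). Qed.

Lemma Z_ad v x j : v \in g -> Zj j.+1 x -> Zj j (br v x).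
Proof.
move=> vg Zx xs sz allg; rewrite -foldr_rcons; apply: Zx.
  by rewrite size_rcons sz.
by rewrite all_rcons vg.
Qed.

Lemma Z_D X xs : forall x, all (fun t => t \in g) xs -> Zj (size xs) x ->
  foldr br (br X x) xs = 0.
Proof.
elim/last_ind: xs => [|xs y IH] x.
  by move=> _ Zx; have /= -> := Zx [::] erefl erefl; rewrite (lin0 (brr X)).
rewrite all_rcons => /andP [yg allg] Zx; rewrite foldr_rcons.
have -> : br y (br X x) = br X (br y x) - br (br X y) x.
  apply: jac_rearr; have := jac y X x.
  rewrite (br_anti x y) (linN (brr X)) (br_anti x (br y X)) (br_anti y X).
  by rewrite (linN (brl x)) opprK.
rewrite (linB (foldr_lin xs)) IH //; last first.
  by apply: Z_ad => //; rewrite -(size_rcons xs y).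
rewrite -foldr_rcons (Zx (rcons xs (br X y))) ?subr0 //; first by rewrite !size_rcons.
by rewrite all_rcons allg ideal.
Qed.

Lemma Zj_D X j x : Zj j x -> Zj j (br X x).
Proof. by move=> Zx xs sz allg; apply: Z_D => //; rewrite sz. Qed.

Lemma Z_all x : exists k, Zj k x.
Proof.
have [k Hk] := nilk; exists k.+1 => xs; case/lastP: xs => [|xs y] //.
rewrite size_rcons all_rcons => -[sz] /andP [yg allg].
by rewrite foldr_rcons Hk ?br_in_g.
Qed.

Lemma tr_adXad X v : v \in g -> vtrace (fun z => br X (br v z)) = 0.
Proof.
move=> vg; have [k Hk] := nilk.
have Hz j : forall x, Zj j x -> iter j (fun z => br X (br v z)) x = 0.
  elim: j => [|j IH] x Zx; first by have /= := Zx [::] erefl erefl.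
  by rewrite iterSr IH //; apply: Zj_D; apply: Z_ad.
apply: (@vtrace_nil _ _ k.+1); first exact: lin_comp (brr X) (brr v).
move=> x; apply: Hz => xs; case/lastP: xs => [|xs y] //.
rewrite size_rcons all_rcons => -[sz] /andP [yg allg].
by rewrite foldr_rcons Hk ?br_in_g.
Qed.

Lemma pgH : pg H = 0.
Proof.
apply: (met_nondeg Hm) => z; rewrite (slin0 (metl Hm z)).
by rewrite (met_sym Hm (pg H)) (met_pg z (pg_mem H)) (met_sym Hm) -(met_pg H (pg_mem z)) HH (tr_ad_g (pg_mem z)).
Qed.

Lemma Ha : H \in a.
Proof. by rewrite -(pgpa H) pgH add0r pa_mem. Qed.

Lemma split_tr f : lin f -> vtrace f =
  vtrace (fun u : subvs_of g => vsproj g (pg (f (vsval u)))) +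
  \sum_(al < \dim a) coord (vbasis a) al (pa (f (tnth (vbasis a) al))).
Proof.
move=> Hf.
rewrite (vtrace_ext (h := fun x => f (pg x) + f (pa x))); last first.
  by move=> x; rewrite -(linD Hf) pgpa.
rewrite vtrace_add; congr (_ + _).
- rewrite (vtrace_rank1 (phi := fun i x => coord (vbasis (fullv : {vspace subvs_of g})) i (vsproj g (pg x)))
     (u := fun i => f (vsval (tnth (vbasis (fullv : {vspace subvs_of g})) i)))) //.
    by move=> i k x y; rewrite !linearP.
  move=> x; rewrite -{1}(vsprojK (pg_mem x)) {1}(vexpU (memvf (vsproj g (pg x)))).
  rewrite linear_sum (lin_sum Hf); apply: eq_bigr => i _.
  by rewrite linearZ /= (linZ Hf).
- rewrite (vtrace_rank1 (phi := fun i x => coord (vbasis a) i (pa x))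
     (u := fun i => f (tnth (vbasis a) i))) //.
    by move=> i k x y; rewrite !linearP.
  move=> x; rewrite {1}(vexpU (pa_mem x)) (lin_sum Hf); apply: eq_bigr => i _.
  by rewrite (linZ Hf).
Qed.

Lemma met_sub_metric : is_metric (met_sub met g).
Proof.
split.
- by move=> k x y z; rewrite /met_sub linearP /= (metl Hm).
- by move=> x y; rewrite /met_sub (met_sym Hm).
- move=> x Hx; apply: subvs_inj; rewrite linear0.
  apply: (met_nondeg Hm) => z; rewrite (slin0 (metl Hm z)).
  rewrite (met_sym Hm) (met_pg z (subvsP x)) (met_sym Hm) -(vsprojK (pg_mem z)).
  exact: Hx.
Qed.

Lemma brsubl z : lin (fun x => br_sub br g x z).
Proof. by move=> k x y; rewrite /br_sub linearP /= (brl _) linearP. Qed.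
Lemma brsubr z : lin (br_sub br g z).
Proof. by move=> k x y; rewrite /br_sub linearP /= (brr _) linearP. Qed.

Notation Ng := (nabla (br_sub br g) (met_sub met g)).

Lemma vsval_brsub u v : vsval (br_sub br g u v) = br (vsval u) (vsval v).
Proof. by rewrite /br_sub vsprojK // br_in_g. Qed.

Lemma P3 u w : u \in g -> w \in g ->
  pg (N u w) = vsval (Ng (vsproj g u) (vsproj g w)).
Proof.
move=> ug wg.
suff <- : vsproj g (pg (N u w)) = Ng (vsproj g u) (vsproj g w).
  by rewrite vsprojK // pg_mem.
apply: (met_nondeg met_sub_metric) => z.
rewrite (nabla_spec met_sub_metric brsubl brsubr) {1}/met_sub vsprojK ?pg_mem //.
rewrite -met_pg ?subvsP // N_spec /koszul /met_sub !vsval_brsub !vsprojK //.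
Qed.

Lemma Nsplit u w : u \in g -> w \in g ->
  N u w = vsval (Ng (vsproj g u) (vsproj g w)) + pa (N u w).
Proof. by move=> ug wg; rewrite -P3 // pgpa. Qed.

Lemma pgNN u v w : u \in g -> v \in g -> w \in g ->
  pg (N u (N v w)) = vsval (Ng (vsproj g u) (Ng (vsproj g v) (vsproj g w))) + br u (pa (N v w)).
Proof.
move=> ug vg wg; rewrite {1}(Nsplit vg wg) (linD (NlinR u)) (N_a _ (pa_mem _)) linearD /=.
by rewrite (P3 ug (subvsP _)) vsvalK (pg_id (br_in_g _ _)).
Qed.

Lemma curv_rel u v w : u \in g -> v \in g -> w \in g ->
  vsproj g (pg (curv br met u v w)) =
  curv (br_sub br g) (met_sub met g) (vsproj g u) (vsproj g v) (vsproj g w)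
  + vsproj g (br u (pa (N v w))) - vsproj g (br v (pa (N u w))).
Proof.
move=> ug vg wg; rewrite /curv !linearB /= (pgNN ug vg wg) (pgNN vg ug wg).
have -> : pg (N (br u v) w) = vsval (Ng (br_sub br g (vsproj g u) (vsproj g v)) (vsproj g w)).
  rewrite P3 ?br_in_g //; congr (vsval (Ng _ _)); apply: subvs_inj.
  by rewrite vsval_brsub !vsprojK // br_in_g.
by rewrite !linearD /= !vsvalK -opprD rearr2.
Qed.

Lemma lin_sub3 (f1 f2 f3 : V -> V) : lin f1 -> lin f2 -> lin f3 ->
  lin (fun z => f1 z - f2 z - f3 z).
Proof. by move=> H1 H2 H3 k x y; rewrite H1 H2 H3 rearr3 !scalerBr. Qed.

Lemma curv_lin1 x y : lin (fun z => curv br met z x y).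
Proof.
apply: lin_sub3.
- exact: NlinL.
- exact: lin_comp (NlinR x) (NlinL y).
- exact: lin_comp (NlinL y) (brl x).
Qed.

Lemma part3 X Y : X \in a -> Y \in a ->
  ricci br met X Y = - vtrace (fun z => br X (br Y z)).
Proof.
move=> Xa Ya; rewrite /ricci -vtrace_opp; apply: vtrace_ext => z.
rewrite /curv !(Na _ Xa) (lin0 (NlinR z)) (N_a (br z X) Ya) subrr sub0r; congr (- _).
rewrite (br_anti (br z X) Y); apply/eqP; rewrite eq_sym -subr_eq0 opprK; apply/eqP.
by have := jac X Y z; rewrite (abel Xa Ya) (lin0 (brr z)) addr0.
Qed.

Notation e := (vbasis (fullv : {vspace V})).
Notation edd := (ed met).

Lemma t1 y : y \in g -> vtrace (fun z => N z y) = 0.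
Proof.
move=> yg; rewrite (vtrace_met Hm).
under eq_bigr => i _ do rewrite (met_sym Hm) N_spec /koszul.
rewrite -mulr_suml big_split /= sumrB.
have s1 : \sum_i met (br (tnth e i) y) (edd i) = - vtrace (br y).
  rewrite -vtrace_opp (vtrace_met Hm); apply: eq_bigr => i _.
  by rewrite (met_sym Hm) (br_anti _ y).
have s2 : \sum_i met (br y (edd i)) (tnth e i) = vtrace (br y).
  rewrite (vtrace_met2 Hm (brr y)); apply: eq_bigr => i _.
  by rewrite (met_sym Hm).
have s3 : \sum_i met (br (edd i) (tnth e i)) y = 0.
  rewrite -(slin_sum (metl Hm y)) (ed_br_sum Hm brl br_anti two_nz).
  exact: (slin0 (metl Hm y)).
by rewrite s1 s2 s3 (tr_ad_g yg) oppr0 !addr0 mul0r.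
Qed.

Lemma skew v a0 b : met (N v a0) b = - met a0 (N v b).
Proof.
rewrite [met a0 _](met_sym Hm) !N_spec /koszul.
rewrite (br_anti b v) (br_anti b a0) (br_anti a0 v) !(slinN (metl Hm _)).
ring.
Qed.

Lemma t2 v X : X \in a -> vtrace (fun z => N v (br z X)) = 0.
Proof.
move=> Xa.
have E : vtrace (fun z => N v (br X z)) = - vtrace (fun z => N v (br X z)).
  rewrite {1}(vtrace_met Hm).
  rewrite (vtrace_comm (NlinR v) (brr X)) (vtrace_met2 Hm (lin_comp (brr X) (NlinR v))).
  rewrite -sumrN; apply: eq_bigr => i _.
  by rewrite (met_sym Hm) skew (sadj _ _ Xa).
have E0 : vtrace (fun z => N v (br X z)) = 0 by lra.
rewrite -[RHS]oppr0 -{}E0 -vtrace_opp; apply: vtrace_ext => z.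
by rewrite (br_anti z X) (linN (NlinR v)).
Qed.

Lemma part2 v X : v \in g -> X \in a -> ricci br met v X = 0.
Proof.
move=> vg Xa; rewrite /ricci.
rewrite (vtrace_ext (h := fun z => (N z (br v X) - N v (br z X)) - br (br z v) X)); last first.
  by move=> z; rewrite /curv !(N_a _ Xa).
rewrite !vtrace_sub t1 ?br_in_g // t2 // subrr sub0r.
rewrite -[RHS]oppr0 -(tr_adXad X vg) ; congr (- _); apply: vtrace_ext => z.
by rewrite (br_anti (br z v) X) (br_anti z v) (linN (brr X)) opprK.
Qed.

Lemma Tb v w : vtrace (fun u : subvs_of g => vsproj g (br (vsval u) (pa (N v w))))
  = - met (br H v) w.
Proof.
set Y := pa (N v w); have Ya : Y \in a by apply: pa_mem.
have := split_tr (brr Y); rewrite big1 ?addr0; last first.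
  move=> al _; rewrite (abel Ya (vbasis_mem (mem_tnth al _))).
  by rewrite !linear0.
rewrite -HH => E.
have -> : met (br H v) w = met H Y.
  by rewrite (met_sym Hm H) /Y -(met_pa _ Ha) N_spec (kosz_a _ _ Ha).
rewrite E -vtrace_opp; apply: vtrace_ext => u.
by rewrite (pg_id (br_in_g _ _)) (br_anti Y) linearN opprK.
Qed.

Lemma Tc v w : v \in g -> vtrace (fun u : subvs_of g => vsproj g (br v (pa (N (vsval u) w))))
  = \sum_(al < \dim a) coord (vbasis a) al (pa (N (br v (tnth (vbasis a) al)) w)).
Proof.
move=> vg.
rewrite (vtrace_rank1 (phi := fun al (u : subvs_of g) => coord (vbasis a) al (pa (N (vsval u) w)))
   (u := fun al => vsproj g (br v (tnth (vbasis a) al)))).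
- by apply: eq_bigr => al _; rewrite vsprojK // br_in_g.
- by move=> al k x y; rewrite linearP /= (NlinL w) !linearP.
- move=> u; rewrite {1}(vexpU (pa_mem (N (vsval u) w))) (lin_sum (brr v)) linear_sum.
  by apply: eq_bigr => al _; rewrite (linZ (brr v)) linearZ.
Qed.

Lemma Sec v w : \sum_(al < \dim a) coord (vbasis a) al (pa (curv br met (tnth (vbasis a) al) v w))
  = \sum_(al < \dim a) coord (vbasis a) al (pa (N (br v (tnth (vbasis a) al)) w)).
Proof.
apply: eq_bigr => al _; have Xa := vbasis_mem (mem_tnth al (vbasis a)).
rewrite /curv !(Na _ Xa) (lin0 (NlinR v)) subrr sub0r (br_anti _ v) (linN (NlinL w)).
by rewrite opprK.
Qed.

Lemma part1 v w : v \in g -> w \in g ->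
  ricci br met v w =
  ricci (br_sub br g) (met_sub met g) (vsproj g v) (vsproj g w) - met (br H v) w.
Proof.
move=> vg wg; rewrite /ricci (split_tr (curv_lin1 v w)).
rewrite (vtrace_ext (h := fun u : subvs_of g =>
  curv (br_sub br g) (met_sub met g) u (vsproj g v) (vsproj g w) +
  (vsproj g (br (vsval u) (pa (N v w))) - vsproj g (br v (pa (N (vsval u) w)))))); last first.
  by move=> u; rewrite curv_rel ?subvsP // vsvalK addrA.
rewrite vtrace_add (vtrace_sub (fun u : subvs_of g => vsproj g (br (vsval u) (pa (N v w))))) Tb Tc // Sec.
ring.
Qed.

End Main.

Theorem lemma3p8 (R : realType) (V : vectType R) (br : V -> V -> V)
  (met : V -> V -> R) (g a : {vspace V}) (H : V) :
  is_lie_bracket br -> is_metric met -> pseudo_iwasawa br met g a ->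
  (forall v, met H v = vtrace (br v)) ->
  [/\ (forall v w, v \in g -> w \in g ->
         ricci br met v w =
         ricci (br_sub br g) (met_sub met g) (vsproj g v) (vsproj g w)
         - met (br H v) w),
      (forall v X, v \in g -> X \in a -> ricci br met v X = 0) &
      (forall X Y, X \in a -> Y \in a ->
         ricci br met X Y = - vtrace (fun z => br X (br Y z)))].
Proof.
move=> Hbr Hm Hiw HH; split.
- by move=> v w vg wg; apply: (part1 Hbr Hm Hiw HH vg wg).
- by move=> v X vg Xa; apply: (part2 Hbr Hm Hiw vg Xa).
- by move=> X Y Xa Ya; apply: (part3 Hbr Hm Hiw Xa Ya).
Qed.
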